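(* Let $p$ be an odd prime and $a\in\mathbb Z_p$ with $a\not\equiv 0,-1\pmod p$. Then, as polynomials in an indeterminate $t$ with coefficients in $\mathbb Z_p$ (congruence coefficientwise), $$\sum_{k=0}^{p-2}\binom ak\binom{-1-a}k\binom{2k}k\frac{(-t(t+1))^k}{k+1}\equiv\Big(\sum_{k=0}^{p-1}\binom ak\binom{-1-a}k(-t)^k\Big)^2-\frac{t+1}{a(a+1)t}\Big(\sum_{k=0}^{p-1}\binom ak\binom{-1-a}k k(-t)^k\Big)^2\pmod{p^2},$$ where the last term is a polynomial in $t$ since the squared sum is divisible by $t^2$.
   Context: $\mathbb Z_p$ denotes the set of rational numbers whose denominator is not divisible by $p$; for $u,v\in\mathbb Z_p$, $u\equiv v\pmod{p^r}$ means $(u-v)/p^r\in\mathbb Z_p$. For $a$ rational, the generalized binomial coefficient is $\binom a0=1$ and $\binom ak=\frac{a(a-1)\cdots(a-k+1)}{k!}$ for $k\ge1$. *)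

(* Defs.v *)
From mathcomp Require Import all_boot all_order all_algebra.
Set Implicit Arguments. Unset Strict Implicit. Unset Printing Implicit Defensive.
Import Order.TTheory GRing.Theory Num.Theory.
Local Open Scope ring_scope.

(* x is in Z_p : the (reduced) denominator of x is not divisible by p *)
Definition pint (p : nat) (x : rat) : bool := ~~ (p %| `|denq x|)%N.

Definition congr_mod (p r : nat) (u v : rat) : Prop :=
  pint p ((u - v) / (p ^ r)%:R).

Definition binq (a : rat) (k : nat) : rat :=
  (\prod_(i < k) (a - i%:R)) / (k`!)%:R.

Definition pcongr_mod (p r : nat) (P Q : {poly rat}) : Prop :=
  forall i : nat, congr_mod p r P`_i Q`_i.

(* Main.v *)
Require Import Defs.
From HB Require Import structures.
From mathcomp Require Import all_boot all_order all_algebra.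
From mathcomp Require Import zify ring lra.
Set Implicit Arguments. Unset Strict Implicit. Unset Printing Implicit Defensive.
Import Order.TTheory GRing.Theory Num.Theory.
Local Open Scope ring_scope.

Section PInt.
Variable p : nat.
Hypothesis pr : prime p.

Lemma pintP x : pint p x <-> exists m d : int, ~~ (p %| `|d|)%N /\ x = m%:~R / d%:~R.
Proof.
split.
  move=> h; exists (numq x), (denq x); split => //; by rewrite divq_num_den.
case=> m [d [hd ->]]; rewrite /pint.
move: hd; case: divqP => [_|k y kn0]; first by rewrite dvdn0.
rewrite abszM Euclid_dvdM //; by case/norP.
Qed.

Lemma dnz (d : int) : ~~ (p %| `|d|)%N -> d%:~R != 0 :> rat.
Proof. by move=> h; rewrite intr_eq0; apply: contraNneq h => ->. Qed.

Lemma pintD x y : pint p x -> pint p y -> pint p (x + y).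
Proof.
move=> /pintP [m1 [d1 [h1 ->]]] /pintP [m2 [d2 [h2 ->]]].
apply/pintP; exists (m1 * d2 + m2 * d1), (d1 * d2); split.
  by rewrite abszM Euclid_dvdM // negb_or h1 h2.
have d1n0 := dnz h1; have d2n0 := dnz h2.
rewrite !rmorphD !rmorphM /=. field. by rewrite d1n0 d2n0.
Qed.

Lemma pintM x y : pint p x -> pint p y -> pint p (x * y).
Proof.
move=> /pintP [m1 [d1 [h1 ->]]] /pintP [m2 [d2 [h2 ->]]].
apply/pintP; exists (m1 * m2), (d1 * d2); split.
  by rewrite abszM Euclid_dvdM // negb_or h1 h2.
have d1n0 := dnz h1; have d2n0 := dnz h2.
rewrite !rmorphM /=. field. by rewrite d1n0 d2n0.
Qed.

Lemma pintZ (z : int) : pint p z%:~R.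
Proof. apply/pintP; exists z, 1; split; last by rewrite divr1.
by rewrite /= dvdn1; apply/eqP => h; move: pr; rewrite h. Qed.

Lemma pintN x : pint p x -> pint p (- x).
Proof. move=> h; rewrite -mulN1r; apply: pintM => //; exact: (pintZ (-1)). Qed.

Lemma pintB x y : pint p x -> pint p y -> pint p (x - y).
Proof. by move=> hx hy; apply: pintD => //; apply: pintN. Qed.

Lemma pintn (n : nat) : pint p n%:R.
Proof. exact: (pintZ n). Qed.

Lemma pintVn (n : nat) : ~~ (p %| n)%N -> pint p (n%:R^-1).
Proof. move=> h; apply/pintP; exists 1, n; split => //; by rewrite div1r. Qed.

End PInt.

Definition pintS (p : nat) : {pred rat} := fun x => (prime p) ==> pint p x.

Fact pintS_subring p : subring_closed (pintS p).
Proof.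
split; rewrite /pintS.
- by apply/implyP => pr; apply: (pintZ pr 1).
- move=> x y /implyP hx /implyP hy; apply/implyP => pr; apply: pintB; auto.
- move=> x y /implyP hx /implyP hy; apply/implyP => pr; apply: pintM; auto.
Qed.
HB.instance Definition _ p := GRing.isSubringClosed.Build rat (pintS p) (pintS_subring p).

Notation PI p := (polyOver (pintS p)).
Notation PPI p := (polyOver (polyOver_pred (pintS p))).

Section Taylor.
Variable p : nat.
Hypothesis pr : prime p.
Local Notation Zp := (pintS p).

Lemma ZpE x : (x \in Zp) = pint p x.
Proof. by rewrite /pintS unfold_in /= pr. Qed.

Lemma pn0 : (p%:R : rat) != 0.
Proof. by rewrite pnatr_eq0; apply/eqP => h; move: pr; rewrite h. Qed.

Lemma Zp_nat (n : nat) : (n%:R : rat) \in Zp.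
Proof. exact: rpred_nat. Qed.

Lemma mono_taylor (n s : rat) i : n \in Zp -> s \in Zp ->
  ((n + p%:R * s) ^+ i - (1 + s) * n ^+ i + s * (n - p%:R) ^+ i) / (p%:R ^+ 2) \in Zp.
Proof.
move=> hn hs; elim: i => [|i IH].
  by rewrite !expr0 !mulr1 (_ : 1 - (1 + s) + s = 0) ?mul0r ?rpred0 //; ring.
have [W hWZ hW]: exists2 W, W \in Zp & (n + p%:R * s) ^+ i - (n - p%:R) ^+ i = p%:R * (s + 1) * W.
  exists (\sum_(j < i) (n + p%:R * s) ^+ (i.-1 - j) * (n - p%:R) ^+ j).
    have h1 : n + p%:R * s \in Zp by rewrite rpredD // rpredM // Zp_nat.
    have h2 : n - p%:R \in Zp by rewrite rpredB // Zp_nat.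
    by apply: rpred_sum => j _; rewrite rpredM // rpredX.
  rewrite subrXX; congr (_ * _); ring.
rewrite (_ : _ / _ = n * (((n + p%:R * s) ^+ i - (1 + s) * n ^+ i + s * (n - p%:R) ^+ i) / (p%:R ^+ 2))
   + s * ((n + p%:R * s) ^+ i - (n - p%:R) ^+ i) / p%:R).
  rewrite hW (_ : s * (p%:R * (s + 1) * W) / p%:R = s * (s + 1) * W).
    apply: rpredD; first exact: rpredM hn IH.
    by rewrite !rpredM ?rpredD ?rpred1.
  field; apply: pn0.
rewrite !exprS; field; apply: pn0.
Qed.

Lemma poly_taylor (P : {poly rat}) (n s : rat) : P \is a PI p -> n \in Zp -> s \in Zp ->
  (P.[n + p%:R * s] - (1 + s) * P.[n] + s * P.[n - p%:R]) / (p%:R ^+ 2) \in Zp.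
Proof.
move=> /polyOverP hP hn hs; rewrite !horner_coef !mulr_sumr -sumrN -!big_split /= mulr_suml.
apply: rpred_sum => i _.
rewrite (_ : _ / _ = P`_i * (((n + p%:R * s) ^+ i - (1 + s) * n ^+ i + s * (n - p%:R) ^+ i) / (p%:R ^+ 2))).
  by rewrite rpredM ?mono_taylor.
field; apply: pn0.
Qed.
End Taylor.

Section Decomp.
Variable p : nat.
Hypothesis pr : prime p.
Local Notation Zp := (pintS p).

Lemma decomp_int (a : rat) : pint p a ->
  exists (r : nat) (s : rat), [/\ (r < p)%N, s \in Zp & a = r%:R + p%:R * s].
Proof.
move=> ha.
have dpos : (0 < `|denq a|)%N by rewrite absz_gt0 denq_neq0.
have cop : gcdn `|denq a| p = 1%N.
  by apply/eqP; rewrite -/(coprime _ _) coprime_sym prime_coprime //; rewrite /pint in ha.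
case: (egcdnP p dpos) => km kn hk _.
rewrite cop in hk.
set d := denq a; set m := numq a.
have hd : `|d|%:Z = d by rewrite absz_denq.
set q := ((m * km%:Z) %/ p%:Z)%Z; set r := ((m * km%:Z) %% p%:Z)%Z.
have p0 : p%:Z != 0 by apply/eqP => -[] h; move: pr; rewrite h.
have r0 : 0 <= r by apply: modz_ge0.
have rp : r < p%:Z by apply: ltz_pmod; rewrite ltz_nat prime_gt0.
exists `|r|%N, ((- m * kn%:Z + d * q)%:~R / d%:~R); split.
- by rewrite -ltz_nat gez0_abs.
- rewrite (ZpE pr); apply/pintP => //; exists (- m * kn%:Z + d * q), d; split => //.
have dn0 : d%:~R != 0 :> rat by rewrite intr_eq0 denq_neq0.
have e1 : (m * km%:Z) = q * p%:Z + r by apply: divz_eq.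
have e2 : (km * `|d| = kn * p + 1)%N by [].
have e2' : km%:Z * d = kn%:Z * p%:Z + 1.
  by rewrite -hd -!PoszM -PoszD e2.
have e3 : (`|r|%N%:R : rat) = r%:~R by rewrite -[in RHS](gez0_abs r0).
rewrite e3 -{1}[a]divq_num_den -/m -/d.
have e1' : (m%:~R * km%:R : rat) = q%:~R * p%:R + r%:~R.
  by have := congr1 (fun z : int => z%:~R : rat) e1; rewrite /= rmorphD !rmorphM.
have e2'' : (km%:R * d%:~R : rat) = kn%:R * p%:R + 1.
  by have := congr1 (fun z : int => z%:~R : rat) e2'; rewrite /= rmorphD !rmorphM.
have hr : (r%:~R : rat) = m%:~R * km%:R - q%:~R * p%:R by rewrite e1'; ring.
clearbody q r; rewrite hr.
rewrite rmorphD !rmorphM rmorphN /=.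
apply: (mulIf dn0).
rewrite (_ : (m%:~R / d%:~R) * d%:~R = m%:~R :> rat); last by field.
rewrite (_ : (m%:~R * km%:R - q%:~R * p%:R + p%:R * ((- m%:~R * kn%:~R + d%:~R * q%:~R) / d%:~R)) * d%:~R
  = m%:~R * (km%:R * d%:~R) - p%:R * m%:~R * kn%:~R :> rat); last by field.
rewrite e2''. rewrite -[kn%:~R]/(kn%:R : rat). ring.
Qed.
End Decomp.


Lemma coefXM' (P : {poly rat}) j : ('X * P)`_j = if j is j'.+1 then P`_j' else 0.
Proof. by rewrite coefXM; case: j. Qed.

Lemma binc k : (k.+1 * 'C(k.+1.*2, k.+1) = 2 * k.*2.+1 * 'C(k.*2, k))%N.
Proof.
have h1 := mul_bin_diag k.+1.*2 k.
have h2 := mul_bin_diag k.*2.+1 k.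
have h3 : 'C(k.*2.+1, k.+1) = 'C(k.*2.+1, k).
  by rewrite -bin_sub; [congr 'C(_, _); lia | lia].
have e1 : (k.+1.*2).-1 = k.*2.+1 by lia.
have e2 : (k.*2.+1).-1 = k.*2 by lia.
rewrite e1 in h1; rewrite e2 h3 in h2.
apply/eqP; rewrite -(eqn_pmul2l (ltn0Sn k)); apply/eqP.
move: h1 h2; set A := 'C(k.+1.*2, k.+1); set B := 'C(k.*2.+1, k); set C := 'C(k.*2, k).
move=> h1 h2.
have -> : (k.+1 * (k.+1 * A) = k.+1 * (k.+1.*2 * B))%N by rewrite h1.
have -> : (k.+1 * (k.+1.*2 * B) = 2 * k.+1 * (k.+1 * B))%N by lia.
rewrite -h2; lia.
Qed.

Lemma addn_neq0 (c : rat) (i : nat) : 0 < c -> c + i%:R != 0.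
Proof. move=> h; apply/eqP => e; have : 0 <= (i%:R : rat) := ler0n _ _; lra. Qed.

Lemma deriv1 : (1 : {poly rat})^`() = 0.
Proof. by rewrite -polyC1 derivC. Qed.

Lemma deriv0_const (P : {poly rat}) : P^`() = 0 -> P = (P.[0])%:P.
Proof.
move=> h; apply/polyP => i; rewrite coefC horner_coef0.
case: i => [//|i] /=.
have := congr1 (fun Q : {poly rat} => Q`_i) h; rewrite coef_deriv coef0 => /eqP.
by rewrite -mulr_natr mulf_eq0 pnatr_eq0 orbF => /eqP.
Qed.

Section Exact.
Variable x : rat.
Hypothesis x0 : x != 0.
Variable u : nat -> rat.
Hypothesis urec : forall k, u k.+1 * (k.+1)%:R ^+ 2 = (x - (k * k.+1)%:R) * u k.
Hypothesis u0 : u 0 = 1.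
Variable N : nat.
Hypothesis uN : forall k, (N <= k)%N -> u k = 0.

Definition Sp := \poly_(k < N) u k.
Lemma coefS k : Sp`_k = u k.
Proof. by rewrite coef_poly; case: ltnP => // /uN ->. Qed.

Lemma ODE : 'X * ('X * Sp^`()^`()) + 'X * Sp^`()^`() + 2%:R *: ('X * Sp^`()) + Sp^`() = x *: Sp.
Proof.
apply/polyP => j; rewrite !(coefD, coefZ, coefXM', coef_deriv, coefS).
case: j => [|[|i]]; rewrite /= ?(coefXM', coef_deriv, coefS) /=.
- have h := urec 0; rewrite u0 in h; have e : x = u 1 by rewrite -[u 1]mulr1 (_ : 1 = (0%N.+1)%:R ^+ 2) ?h; ring.
  by rewrite u0 e; ring.
- have h := urec 1; have e : x * u 1 = u 2 * 2%:R ^+ 2 + (1 * 2)%:R * u 1 by rewrite h; ring.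
  by rewrite e; ring.
- have h := urec i.+2.
  have e : x * u i.+2 = u i.+3 * (i.+3)%:R ^+ 2 + (i.+2 * i.+3)%:R * u i.+2 by rewrite h; ring.
  by rewrite e; ring.
Qed.

Definition Qop (y : {poly rat}) := 'X * ('X * y^`()^`()) + 'X * y^`()^`() + 2%:R *: ('X * y^`()) + y^`() - (2 * x) *: y.
Definition Phi (y : {poly rat}) := ('X * ('X * Qop y) + 'X * Qop y)^`() - (2 * x) *: ('X * ('X * y^`()) + 'X * y^`()).

Lemma Phi_coef (d : {poly rat}) m : (forall i, (i <= m)%N -> d`_i = 0) -> (Phi d)`_m = d`_m.+1 * (m.+1)%:R ^+ 3.
Proof.
move=> hd; rewrite /Phi /Qop.
case: m hd => [|[|m]] hd; rewrite /= !(coefB, coefD, coefZ, coefXM', coef_deriv) /=;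
  rewrite ?(coefB, coefD, coefZ, coefXM', coef_deriv) /=;
  rewrite ?(coefB, coefD, coefZ, coefXM', coef_deriv) /=.
- by rewrite (hd 0) //; ring.
- by rewrite (hd 0) // (hd 1) //; ring.
- rewrite (hd m.+1 (leqnSn _)) (hd m.+2 (leqnn _)).
  case: m hd => [|m] hd /=; rewrite ?coef_deriv.
    by rewrite ?(hd 1 isT); ring.
  by rewrite (hd m.+2 (leqnSn _)); ring.
Qed.

Lemma PhiB a b : Phi (a - b) = Phi a - Phi b.
Proof.
rewrite /Phi /Qop !(derivB, derivD, derivZ, derivM, derivX, derivN).
rewrite -!mul_polyC. ring.
Qed.

Lemma Phi_uniq d : Phi d = 0 -> d`_0 = 0 -> d = 0.
Proof.
move=> hP h0.
suff H : forall m i, (i <= m)%N -> d`_i = 0.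
  by apply/polyP => i; rewrite coef0 (H i).
elim=> [|m IH] i.
  by rewrite leqn0 => /eqP ->.
rewrite leq_eqVlt => /orP [/eqP ->|]; last by apply: IH.
have := Phi_coef IH; rewrite hP coef0 => /esym /eqP.
by rewrite mulf_eq0 expf_eq0 /= pnatr_eq0 orbF => /eqP.
Qed.

Lemma PhiS2 : Phi (Sp * Sp) = 0.
Proof.
have hE := ODE.
have E0 : 'X * ('X * Sp^`()^`()) + 'X * Sp^`()^`() + 2%:R *: ('X * Sp^`()) + Sp^`() - x *: Sp = 0.
  by rewrite hE subrr.
set E := _ - _ in E0.
have dE : E^`() = 0 by rewrite E0 deriv0.
have -> : Phi (Sp * Sp) = (4%:R *: (('X * 'X + 'X) * Sp^`()) + 2%:R *: (('X * 'X + 'X) * Sp)^`()) * E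
   + 2%:R *: (('X * 'X + 'X) * Sp) * E^`().
  rewrite /E /Phi /Qop !(derivB, derivD, derivZ, derivM, derivX, derivN).
  rewrite -!mul_polyC. ring.
by rewrite dE E0 !mulr0 addr0.
Qed.

Definition w k := u k * ('C(k.*2, k))%:R.
Lemma wrec k : w k.+1 * (k.+1)%:R ^+ 3 = 2%:R * (2 * k + 1)%:R * (x - (k * k.+1)%:R) * w k.
Proof.
rewrite /w.
have hb : (k.+1%:R * ('C(k.+1.*2, k.+1))%:R : rat) = 2%:R * (2 * k + 1)%:R * ('C(k.*2, k))%:R.
  by rewrite -!natrM binc -mul2n addn1.
rewrite (_ : u k.+1 * ('C(k.+1.*2, k.+1))%:R * k.+1%:R ^+ 3 = (u k.+1 * k.+1%:R ^+ 2) * (k.+1%:R * ('C(k.+1.*2, k.+1))%:R)); last by ring.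
rewrite urec hb; ring.
Qed.

Definition Y := \poly_(k < N) w k.
Lemma coefY k : Y`_k = w k.
Proof. by rewrite coef_poly; case: ltnP => // /uN h; rewrite /w h mul0r. Qed.

Definition Gz := 'X * ((4%:R *: ('X * ('X * Y^`()^`())) + 'X * Y^`()^`()) + (6%:R *: ('X * Y^`()) + Y^`()) - (2 * x) *: Y).

Lemma GzODE : Gz^`() = (2 * x) *: ('X * Y^`()).
Proof.
apply/polyP => j; rewrite /Gz !(coefD, coefB, coefZ, coefXM', coef_deriv) /=.
rewrite ?(coefD, coefB, coefZ, coefXM', coef_deriv) /=.
case: j => [|[|i]] /=; rewrite ?(coefD, coefB, coefN, coefZ, coefXM', coef_deriv) /= ?coefY.
- have h := wrec 0.
  have e : w 1 = 2%:R * (2 * 0 + 1)%:R * (x - (0 * 1)%:R) * w 0 / (0.+1)%:R ^+ 3.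
    by rewrite -h; field.
  by rewrite e; field.
- have h := wrec 1.
  have e : w 2 = 2%:R * (2 * 1 + 1)%:R * (x - (1 * 2)%:R) * w 1 / (1.+1)%:R ^+ 3.
    by rewrite -h; field.
  by rewrite e; field.
- have h := wrec i.+2.
  have nz : (i.+3)%:R != 0 :> rat by rewrite pnatr_eq0.
  have e : w i.+3 = 2%:R * (2 * i.+2 + 1)%:R * (x - (i.+2 * i.+3)%:R) * w i.+2 / (i.+3)%:R ^+ 3.
    by rewrite -h; field; rewrite addn_neq0.
  by rewrite e; field; rewrite addn_neq0 // ltr0n.
Qed.

Definition Z : {poly rat} := 'X * 'X + 'X.

Lemma PhiYz : Phi (Y \Po Z) = 0.
Proof.
have h0 : (Gz^`() - (2 * x) *: ('X * Y^`())) \Po Z = 0 by rewrite GzODE subrr comp_poly0.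
have -> : Phi (Y \Po Z) = Z^`() * ((Gz^`() - (2 * x) *: ('X * Y^`())) \Po Z).
  rewrite /Phi /Qop /Gz /Z.
  rewrite !(derivB, derivD, derivZ, derivM, derivX, derivN, deriv_comp).
  rewrite !(comp_polyB, comp_polyD, comp_polyM, comp_polyZ, comp_polyX).
  rewrite ?(derivB, derivD, derivZ, derivM, derivX, derivN, deriv_comp).
  rewrite ?deriv1 -!mul_polyC. ring.
by rewrite h0 mulr0.
Qed.

Lemma S2Yz : Sp * Sp = Y \Po Z.
Proof.
apply/eqP; rewrite -subr_eq0; apply/eqP; apply: Phi_uniq.
  by rewrite PhiB PhiS2 PhiYz subrr.
rewrite coefB coef0M coefS u0 -horner_coef0 horner_comp.
rewrite /Z !hornerE horner_coef0 coefY /w u0 bin0 mul1r; ring.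
Qed.

Definition Lp := \poly_(k < N) (w k / (k.+1)%:R).

Lemma XLp : ('X * Lp)^`() = Y.
Proof.
apply/polyP => j; rewrite coef_deriv coefXM' coefY coef_poly.
case: ltnP => [_|/uN h]; last by rewrite /w h !mul0r mul0rn.
by rewrite -(mulr_natr (w j / _)) divfK // pnatr_eq0.
Qed.

Lemma Znz : Z != 0.
Proof.
apply/eqP => hz; have := congr1 (fun P : {poly rat} => P.[1]) hz.
by rewrite /Z !hornerE => /eqP; rewrite (_ : 1 * 1 + 1 = 2%:R :> rat) ?pnatr_eq0 //; ring.
Qed.

Lemma exact_id : x *: (Lp \Po Z) = x *: (Sp * Sp) - ('X + 1) * ('X * (Sp^`() * Sp^`())).
Proof.
apply: (mulfI Znz).
set F := Z * (x *: (Lp \Po Z)) - Z * (x *: (Sp * Sp) - ('X + 1) * ('X * (Sp^`() * Sp^`()))).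
suff : F = 0 by move/eqP; rewrite subr_eq0 => /eqP.
have E0 : 'X * ('X * Sp^`()^`()) + 'X * Sp^`()^`() + 2%:R *: ('X * Sp^`()) + Sp^`() - x *: Sp = 0.
  by rewrite ODE subrr.
set E := _ - _ in E0.
have hF : F^`() = 0.
  have e1 : Z * (x *: (Lp \Po Z)) = x *: (('X * Lp) \Po Z) by rewrite comp_polyM comp_polyX scalerAr.
  have -> : F^`() = x *: (Z^`() * ((('X * Lp)^`()) \Po Z - Sp * Sp)) + 2%:R *: ('X * ('X + 1) * Sp^`()) * E.
    rewrite /F e1 /E /Z.
    rewrite ?(derivB, derivD, derivZ, derivM, derivX, derivN, deriv_comp, deriv1).
    rewrite -!mul_polyC. ring.
  by rewrite XLp -S2Yz subrr mulr0 scaler0 E0 mulr0 addr0.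
by rewrite (deriv0_const hF) /F /Z !hornerE oppr0.
Qed.
End Exact.



Lemma fact_neq0 k : (k`!)%:R != 0 :> rat.
Proof. by rewrite pnatr_eq0 -lt0n fact_gt0. Qed.

Ltac nz := rewrite ?addn_neq0 ?fact_neq0 ?ltr01 ?ltr0n ?andbT //.
Lemma binq0 a : binq a 0 = 1.
Proof. by rewrite /binq big_ord0 fact0 divr1. Qed.

Lemma binqS a k : binq a k.+1 = binq a k * (a - k%:R) / (k.+1)%:R.
Proof.
rewrite /binq big_ord_recr /= factS natrM.
have := fact_neq0 k; have : (k.+1)%:R != 0 :> rat by rewrite pnatr_eq0.
move=> h1 h2; field; nz.
Qed.

Lemma binq_nat n k : (n < k)%N -> binq n%:R k = 0.
Proof.
elim: k => [//|k IH]; rewrite ltnS leq_eqVlt => /orP [/eqP ->|/IH h].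
  by rewrite binqS subrr mulr0 mul0r.
by rewrite binqS h !mul0r.
Qed.

Definition u a k := binq a k * binq (-1 - a) k * (-1) ^+ k.

Lemma u0 a : u a 0 = 1.
Proof. by rewrite /u !binq0 expr0 !mulr1. Qed.

Lemma urec a k : u a k.+1 * (k.+1)%:R ^+ 2 = (a * (a + 1) - (k * k.+1)%:R) * u a k.
Proof.
rewrite /u !binqS exprS natrM.
have : (k.+1)%:R != 0 :> rat by rewrite pnatr_eq0.
move=> h; field; nz.
Qed.

Lemma u_nat n k : (n < k)%N -> u n%:R k = 0.
Proof. by move=> h; rewrite /u binq_nat // !mul0r. Qed.

Definition Sst p a : {poly rat} := \sum_(0 <= k < p) (binq a k * binq (-1 - a) k) *: (- 'X) ^+ k.
Definition Tst p a : {poly rat} := \sum_(0 <= k < p) (binq a k * binq (-1 - a) k * k%:R) *: (- 'X) ^+ k.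
Definition Lst p a : {poly rat} := \sum_(0 <= k < p.-1)
        (binq a k * binq (-1 - a) k * ('C(k.*2, k))%:R / (k.+1)%:R) *: (- ('X * ('X + 1))) ^+ k.
Definition Rst p a := Sst p a ^+ 2 - (a * (a + 1))^-1 *: (('X + 1) * (Tst p a ^+ 2 %/ 'X)).

Lemma negP_exp (P : {poly rat}) k : (- P)^+k = (-1)^+k *: P^+k.
Proof. by rewrite -scaleN1r exprZn. Qed.

Lemma poly_trunc (F : nat -> rat) M N : (M <= N)%N -> (forall k, (M <= k)%N -> F k = 0) ->
  \poly_(k < N) F k = \poly_(k < M) F k.
Proof.
move=> hMN hF; apply/polyP => i; rewrite !coef_poly.
case: (ltnP i M) => h; first by rewrite (leq_trans h hMN).
by case: ifP => _ //; rewrite hF.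
Qed.

Lemma Sst_poly p a : Sst p a = \poly_(k < p) u a k.
Proof.
rewrite /Sst poly_def big_mkord; apply: eq_bigr => k _.
by rewrite negP_exp scalerA /u.
Qed.

Lemma Tst_poly p a : Tst p a = 'X * (\poly_(k < p) u a k)^`().
Proof.
have -> : Tst p a = \poly_(k < p) (u a k * k%:R).
  rewrite /Tst poly_def big_mkord; apply: eq_bigr => k _.
  by rewrite negP_exp scalerA /u; congr (_ *: _); ring.
apply/polyP => j; rewrite coefXM coef_poly.
case: j => [|j] /=; first by rewrite mulr0; case: ifP.
rewrite coef_deriv coef_poly; case: ifP => _; last by rewrite mul0rn.
by rewrite mulr_natr.
Qed.

Lemma comp_exp (P Q : {poly rat}) k : (P ^+ k) \Po Q = (P \Po Q) ^+ k.
Proof. by elim: k => [|k IH]; rewrite ?expr0 ?comp_polyC -?polyC1 ?comp_polyC // !exprS comp_polyM IH. Qed.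

Lemma Lst_poly p a : Lst p a = (\poly_(k < p.-1) (u a k * ('C(k.*2, k))%:R / (k.+1)%:R)) \Po Z.
Proof.
rewrite /Lst poly_def big_mkord.
rewrite (big_morph (fun P => P \Po Z) (fun P Q => comp_polyD P Q Z) (comp_poly0 Z)).
apply: eq_bigr => k _.
rewrite comp_polyZ comp_exp comp_polyX negP_exp scalerA /u /Z.
congr (_ *: _); first ring.
by rewrite mulrDr mulr1.
Qed.

Lemma Est_nat p n : (0 < n)%N -> (n < p.-1)%N -> Lst p n%:R = Rst p n%:R.
Proof.
move=> n0 np.
set a : rat := n%:R.
have x0 : a * (a + 1) != 0.
  rewrite mulf_eq0 negb_or /a pnatr_eq0 -lt0n n0 /=.
  by rewrite (_ : n%:R + 1 = (n.+1)%:R :> rat) ?pnatr_eq0 // -addn1 natrD.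
have uN : forall k, (n.+1 <= k)%N -> u a k = 0 by move=> k hk; apply: u_nat.
have := @exact_id (a * (a + 1)) (u a) (urec a) (u0 a) n.+1 uN.
rewrite /Sp /Lp /w.
have hp1 : (n.+1 <= p.-1)%N by [].
have hp : (n.+1 <= p)%N by apply: leq_trans hp1 (leq_pred _).
rewrite /Rst Lst_poly Tst_poly Sst_poly.
rewrite (@poly_trunc _ n.+1 p.-1) //; last by move=> k hk; rewrite uN // !mul0r.
rewrite (@poly_trunc _ n.+1 p) //.
set SS := \poly_(k < n.+1) u a k.
set LL := \poly_(k < n.+1) _.
move=> h.
have -> : ('X * SS^`()) ^+ 2 %/ 'X = 'X * (SS^`() * SS^`()).
  rewrite (_ : ('X * SS^`()) ^+ 2 = 'X * ('X * (SS^`() * SS^`()))); last by rewrite expr2; ring.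
  by rewrite mulKp // polyX_eq0.
apply: (@scalerI _ _ (a * (a + 1))) => //.
rewrite h scalerBr scalerA mulfV // scale1r expr2 //.
Qed.

Lemma ndvd_fact p k : prime p -> (k < p)%N -> ~~ (p %| k`!)%N.
Proof.
move=> pr; elim: k => [|k IH] hk.
  by rewrite fact0 dvdn1; apply/eqP => h; move: pr; rewrite h.
rewrite factS Euclid_dvdM // negb_or IH ?(ltnW hk) // andbT.
by apply/negP => /(dvdn_leq (ltn0Sn _)); rewrite leqNgt hk.
Qed.

Definition baP k : {poly rat} := \prod_(i < k) ('X - (i%:R)%:P) * ((k`!)%:R^-1)%:P.
Definition b1P k : {poly rat} := \prod_(i < k) ('X - ((i.+1)%:R)%:P) * (((k.+1)`!)%:R^-1)%:P.
Definition mX : {poly rat} := - 1 - 'X.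
Definition cqP k := baP k * (baP k \Po mX).
Definition GP k := b1P k.-1 * (b1P k.-1 \Po mX).

Lemma baP_ev a k : (baP k).[a] = binq a k.
Proof.
rewrite /baP hornerM horner_prod hornerC /binq; congr (_ * _).
by apply: eq_bigr => i _; rewrite hornerXsubC.
Qed.

Lemma mX_ev a : mX.[a] = -1 - a.
Proof. by rewrite /mX !hornerE. Qed.

Lemma cqP_ev a k : (cqP k).[a] = binq a k * binq (-1 - a) k.
Proof. by rewrite /cqP hornerM horner_comp mX_ev !baP_ev. Qed.

Lemma binq_split a k : binq a k.+1 = a * (b1P k).[a].
Proof.
rewrite /binq /b1P hornerM horner_prod hornerC big_ord_recl /= subr0 mulrA.
congr (_ * _ * _); apply: eq_bigr => i _; by rewrite hornerXsubC.
Qed.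

Lemma cq_split a k : (0 < k)%N -> binq a k * binq (-1 - a) k = - (a * (a + 1)) * (GP k).[a].
Proof.
case: k => [//|k] _; rewrite /GP /= hornerM horner_comp mX_ev !binq_split; ring.
Qed.

Section Gen.
Variable p : nat.
Definition SG : {poly {poly rat}} := \sum_(0 <= k < p) (cqP k)%:P * (- 'X)^+k.
Definition LG : {poly {poly rat}} := \sum_(0 <= k < p.-1)
   (cqP k * (('C(k.*2, k))%:R / (k.+1)%:R)%:P)%:P * (- ('X * ('X + 1)))^+k.
Definition UG : {poly {poly rat}} := \sum_(0 <= k < p) (GP k * (k%:R)%:P)%:P * (- 'X)^+(k.-1).
Definition EG := LG - (SG * SG - (('X * ('X + 1))%:P) * (('X + 1) * ('X * (UG * UG)))).

Definition ev (a : rat) : {poly {poly rat}} -> {poly rat} := map_poly (horner_eval a).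

Lemma ev_SG a : ev a SG = Sst p a.
Proof.
rewrite /ev /SG rmorph_sum; apply: eq_bigr => k _.
by rewrite rmorphM /= map_polyC /= horner_evalE cqP_ev rmorphXn rmorphN /= map_polyX mul_polyC.
Qed.

Lemma ev_LG a : ev a LG = Lst p a.
Proof.
rewrite /ev /LG rmorph_sum; apply: eq_bigr => k _.
rewrite rmorphM /= map_polyC /= horner_evalE hornerM cqP_ev hornerC rmorphXn rmorphN /=. rewrite [map_poly _ (_ * _)]rmorphM rmorphD /= map_polyX rmorph1 mul_polyC mulrA.
done.
Qed.

Lemma Tst_U a : Tst p a = (a * (a + 1)) *: ('X * ev a UG).
Proof.
rewrite /ev /UG rmorph_sum mulr_sumr scaler_sumr /Tst; apply: eq_bigr => k _.
rewrite rmorphM /= map_polyC /= horner_evalE hornerM hornerC rmorphXn rmorphN /= map_polyX mul_polyC.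
case: k => [|k]; first by rewrite !mulr0 !scale0r mulr0 scaler0.
rewrite cq_split // exprS /=.
rewrite -!mul_polyC !polyCM polyCN; ring.
Qed.

Lemma ev_mul a P Q : ev a (P * Q) = ev a P * ev a Q.
Proof. by rewrite /ev rmorphM. Qed.
Lemma ev_sub a P Q : ev a (P - Q) = ev a P - ev a Q.
Proof. by rewrite /ev rmorphB. Qed.
Lemma ev_add a P Q : ev a (P + Q) = ev a P + ev a Q.
Proof. by rewrite /ev rmorphD. Qed.
Lemma ev_X a : ev a 'X = 'X.
Proof. by rewrite /ev map_polyX. Qed.
Lemma ev_1 a : ev a 1 = 1.
Proof. by rewrite /ev rmorph1. Qed.
Lemma ev_C a c : ev a c%:P = (c.[a])%:P.
Proof. by rewrite /ev map_polyC. Qed.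

Lemma Rst_ev a : a * (a + 1) != 0 -> Rst p a = ev a (SG * SG - (('X * ('X + 1))%:P) * (('X + 1) * ('X * (UG * UG)))).
Proof.
move=> x0; rewrite /Rst Tst_U -ev_SG.
rewrite ev_sub !ev_mul ev_C ev_add ev_X ev_1 !hornerE.
set U := ev a UG; set S := ev a SG.
have -> : ((a * (a + 1)) *: ('X * U)) ^+ 2 %/ 'X = (a * (a + 1)) ^+ 2 *: ('X * (U * U)).
  rewrite (_ : ((a * (a + 1)) *: ('X * U)) ^+ 2 = (a * (a + 1)) ^+ 2 *: ('X * ('X * (U * U)))).
    by rewrite divpZl mulKp // polyX_eq0.
  by rewrite exprZn; congr (_ *: _); rewrite expr2; ring.
have e : ((a * (a + 1))^-1)%:P * ((a * (a + 1)) ^+ 2)%:P = (a * (a + 1))%:P :> {poly rat}.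
  by rewrite -polyCM; congr (_%:P); field; move: x0; rewrite mulf_eq0 negb_or andbC.
rewrite -!mul_polyC.
rewrite (_ : ((a * (a + 1))^-1)%:P * (('X + 1) * (((a * (a + 1)) ^+ 2)%:P * ('X * (U * U))))
  = (((a * (a + 1))^-1)%:P * ((a * (a + 1)) ^+ 2)%:P) * (('X + 1) * ('X * (U * U)))); last by ring.
rewrite e polyCM /=; ring.
Qed.

Lemma Est_ev a : a * (a + 1) != 0 -> Lst p a - Rst p a = ev a EG.
Proof. by move=> x0; rewrite Rst_ev // /EG [in RHS]ev_sub ev_LG. Qed.

End Gen.

Section PIsec.
Variable p : nat.
Hypothesis pr : prime p.
Local Notation Zp := (pintS p).

Lemma Zp_invn k : (0 < k < p)%N -> (k%:R)^-1 \in Zp.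
Proof.
move=> /andP [h0 h1]; rewrite (ZpE pr); apply: pintVn => //.
by apply/negP => /(dvdn_leq h0); rewrite leqNgt h1.
Qed.

Lemma Zp_factinv k : (k < p)%N -> ((k`!)%:R)^-1 \in Zp.
Proof. by move=> h; rewrite (ZpE pr); apply: pintVn => //; apply: ndvd_fact. Qed.

Lemma baP_PI k : (k < p)%N -> baP k \is a PI p.
Proof.
move=> h; rewrite /baP rpredM //.
  by apply: rpred_prod => i _; rewrite rpredB ?polyOverX // polyOverC rpred_nat.
by rewrite polyOverC Zp_factinv.
Qed.

Lemma b1P_PI k : (k.+1 < p)%N -> b1P k \is a PI p.
Proof.
move=> h; rewrite /b1P rpredM //.
  by apply: rpred_prod => i _; rewrite rpredB ?polyOverX // polyOverC rpred_nat.
by rewrite polyOverC Zp_factinv.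
Qed.

Lemma mX_PI : mX \is a PI p.
Proof. by rewrite /mX rpredB ?rpredN ?rpred1 ?polyOverX. Qed.

Lemma cqP_PI k : (k < p)%N -> cqP k \is a PI p.
Proof. by move=> h; rewrite /cqP rpredM ?baP_PI // polyOver_comp ?baP_PI ?mX_PI. Qed.

Lemma GP_PI k : (k < p)%N -> GP k \is a PI p.
Proof.
move=> h; have h' : ((k.-1).+1 < p)%N.
  case: k h => [|k] h //=; exact: prime_gt1 pr.
by rewrite /GP rpredM ?b1P_PI // polyOver_comp ?b1P_PI ?mX_PI.
Qed.

Lemma EG_PI : EG p \is a PPI p.
Proof.
have pp : (0 < p)%N by apply: prime_gt0.
have hL : LG p \is a PPI p.
  rewrite /LG big_mkord; apply: rpred_sum => k _.
  rewrite rpredM ?rpredX ?rpredN ?rpredM ?rpredD ?polyOverX ?rpred1 //.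
  rewrite polyOverC rpredM ?cqP_PI //.
    by apply: (leq_trans (ltn_ord k)); apply: leq_pred.
  rewrite polyOverC rpredM ?rpred_nat // Zp_invn //.
  by have := ltn_ord k; rewrite ltn0Sn /= -ltnS prednK.
have hS : SG p \is a PPI p.
  rewrite /SG big_mkord; apply: rpred_sum => k _.
  rewrite rpredM ?rpredX ?rpredN ?polyOverX //.
  by rewrite polyOverC cqP_PI.
have hU : UG p \is a PPI p.
  rewrite /UG big_mkord; apply: rpred_sum => k _.
  rewrite rpredM ?rpredX ?rpredN ?polyOverX //.
  by rewrite polyOverC rpredM ?GP_PI // polyOverC rpred_nat.
have hC : ('X * ('X + 1))%:P \is a PPI p.
  by rewrite polyOverC rpredM ?rpredD ?polyOverX ?rpred1.
rewrite /EG; apply: rpredB => //; apply: rpredB; first exact: rpredM.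
apply: rpredM => //; apply: rpredM; first by rewrite rpredD ?polyOverX ?rpred1.
by apply: rpredM; [exact: polyOverX | exact: rpredM].
Qed.
End PIsec.

Lemma Lst_sym p a : Lst p (-1 - a) = Lst p a.
Proof.
rewrite /Lst (_ : -1 - (-1 - a) = a); last by ring.
by apply: eq_bigr => k _; rewrite [binq (-1 - a) k * _]mulrC.
Qed.

Lemma Sst_sym p a : Sst p (-1 - a) = Sst p a.
Proof.
rewrite /Sst (_ : -1 - (-1 - a) = a); last by ring.
by apply: eq_bigr => k _; rewrite [binq (-1 - a) k * _]mulrC.
Qed.

Lemma Tst_sym p a : Tst p (-1 - a) = Tst p a.
Proof.
rewrite /Tst (_ : -1 - (-1 - a) = a); last by ring.
by apply: eq_bigr => k _; rewrite [binq (-1 - a) k * _]mulrC.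
Qed.

Lemma Rst_sym p a : Rst p (-1 - a) = Rst p a.
Proof.
rewrite /Rst Sst_sym Tst_sym (_ : (-1 - a) * (-1 - a + 1) = a * (a + 1)) //; ring.
Qed.

Lemma main p (a : rat) :
  prime p -> pint p a ->
  ~ congr_mod p 1 a 0 -> ~ congr_mod p 1 a (-1) ->
  pcongr_mod p 2 (Lst p a) (Rst p a).
Proof.
move=> pr ha hn0 hn1.
have pn0 := pn0 pr.
have [r [s [hr hs ha']]] := decomp_int pr ha.
have r0 : (0 < r)%N.
  rewrite lt0n; apply/negP => /eqP r0; apply: hn0.
  rewrite /congr_mod -(ZpE pr) ha' r0 expn1.
  by rewrite (_ : (0%:R + p%:R * s - 0) / p%:R = s) //; field.
have r1 : (r < p.-1)%N.
  have : r != p.-1.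
    apply/negP => /eqP rp; apply: hn1.
    rewrite /congr_mod -(ZpE pr) ha' rp expn1.
    have e : (p.-1)%:R = p%:R - 1 :> rat.
      by rewrite -[in RHS](prednK (prime_gt0 pr)) -addn1 natrD addrK.
    rewrite e (_ : (p%:R - 1 + p%:R * s - -1) / p%:R = 1 + s); last by field.
    by rewrite rpredD ?rpred1.
  move=> hne; move/eqP: hne; lia.
have xnz : forall b : rat, b != 0 -> b + 1 != 0 -> b * (b + 1) != 0.
  by move=> b h1 h2; rewrite mulf_eq0 negb_or h1 h2.
have a0 : a != 0.
  apply/eqP => e; apply: hn0; rewrite /congr_mod e subrr mul0r -(ZpE pr); exact: rpred0.
have a1 : a + 1 != 0.
  apply/eqP => e; apply: hn1; rewrite /congr_mod (_ : a - -1 = a + 1) ?e ?mul0r -?(ZpE pr) ?rpred0 //; ring.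
move=> i; rewrite /congr_mod -coefB Est_ev ?xnz // /ev coef_map /= horner_evalE.
have hP : (EG p)`_i \is a PI p by move: (EG_PI pr) => /polyOverP; apply.
set P := (EG p)`_i in hP *.
have hr0 : P.[r%:R] = 0.
  have := Est_nat r0 r1 => /eqP; rewrite -subr_eq0 => /eqP.
  rewrite Est_ev; last first.
    rewrite xnz // ?pnatr_eq0 -?lt0n //.
    by rewrite (_ : r%:R + 1 = (r.+1)%:R :> rat) ?pnatr_eq0 // -addn1 natrD.
  move=> h; have := congr1 (fun Q : {poly rat} => Q`_i) h.
  by rewrite /ev coef_map /= horner_evalE coef0.
have hrp : P.[r%:R - p%:R] = 0.
  have rm : (0 < p.-1 - r)%N by lia.
  have rm' : (p.-1 - r < p.-1)%N by lia.
  have := Est_nat rm rm' => /eqP; rewrite -subr_eq0 => /eqP.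
  have e : ((p.-1 - r)%:R : rat) = -1 - (r%:R - p%:R).
    rewrite natrB; last by apply: ltnW.
    have e' : (p.-1)%:R = p%:R - 1 :> rat.
      by rewrite -[in RHS](prednK (prime_gt0 pr)) -addn1 natrD addrK.
    rewrite e'; ring.
  rewrite e Lst_sym Rst_sym Est_ev; last first.
    apply: xnz.
      rewrite subr_eq0; apply/eqP => /eqP; rewrite eqr_nat => /eqP h.
      lia.
    rewrite (_ : r%:R - p%:R + 1 = r.+1%:R - p%:R :> rat); last by rewrite -addn1 natrD; ring.
    rewrite subr_eq0; apply/eqP => /eqP; rewrite eqr_nat => /eqP h.
    lia.
  move=> h; have := congr1 (fun Q : {poly rat} => Q`_i) h.
  by rewrite /ev coef_map /= horner_evalE coef0.
have hrZ : (r%:R : rat) \in pintS p by apply: rpred_nat.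
have := poly_taylor pr hP hrZ hs.
rewrite hr0 hrp !mulr0 subr0 addr0 -ha' (ZpE pr).
by rewrite natrX.
Qed.

Theorem theorem2p1 (p : nat) (a : rat) :
  prime p -> odd p -> pint p a ->
  ~ congr_mod p 1 a 0 -> ~ congr_mod p 1 a (-1) ->
  let S := \sum_(0 <= k < p) (binq a k * binq (-1 - a) k) *: (- 'X) ^+ k in
  let T := \sum_(0 <= k < p) (binq a k * binq (-1 - a) k * k%:R) *: (- 'X) ^+ k in
  pcongr_mod p 2
    (\sum_(0 <= k < p.-1)
        (binq a k * binq (-1 - a) k * ('C(k.*2, k))%:R / (k.+1)%:R)
          *: (- ('X * ('X + 1))) ^+ k)
    (S ^+ 2 - (a * (a + 1))^-1 *: (('X + 1) * (T ^+ 2 %/ 'X))).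
Proof.
move=> pr _ ha h0 h1; exact: (main pr ha h0 h1).
Qed.
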